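(* Consider the planar system $$\frac{dC}{dt} = 1 + m_1\frac{CL}{1+L} - m_2\frac{CL}{1+m_3C} - m_4C,\qquad \frac{dL}{dt} = L - m_5 CL,$$ with positive parameters $m_1,\dots,m_5$, and its equilibria $E_1=(1/m_4,0)$, $E_2=(1/m_5,L_2)$, $E_3=(1/m_5,L_3)$, where $L_2=\frac{-b-\sqrt{\Delta}}{2a}$, $L_3=\frac{-b+\sqrt{\Delta}}{2a}$ with $a=-\frac{m_2}{1+m_3/m_5}$, $b=m_1+m_5-m_4-\frac{m_2}{1+m_3/m_5}$, $c=m_5-m_4$, $\Delta=b^2-4ac$. The equilibria undergo a transcritical bifurcation at $m_4=m_5$: - when $m_2>m_1(1+m_3/m_5)$, $E_1$ and $E_2$ undergo a transcritical bifurcation; - when $m_2<m_1(1+m_3/m_5)$, $E_1$ and $E_3$ undergo a transcritical bifurcation.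
   Context: Nondimensional model of CAR-T cells $C$ and lymphoma cells $L$. $E_1$ is the tumor-free equilibrium; $E_2,E_3$ are the coexistence equilibria, whose $L$-coordinates are the roots of $aL^2+bL+c=0$. *)

(* Defs.v *)
From Stdlib Require Import Reals.
From Coquelicot Require Import Coquelicot.
Open Scope R_scope.

(* The CAR-T / lymphoma vector field; the bifurcation parameter is m4. *)
Definition dC (m1 m2 m3 m4 : R) (C L : R) : R :=
  1 + m1 * (C * L / (1 + L)) - m2 * (C * L / (1 + m3 * C)) - m4 * C.
Definition dL (m5 : R) (C L : R) : R := L - m5 * C * L.

Definition field (m1 m2 m3 m5 : R) (m4 : R) (x : R * R) : R * R :=
  (dC m1 m2 m3 m4 (fst x) (snd x), dL m5 (fst x) (snd x)).

Definition qa (m2 m3 m5 : R) : R := - (m2 / (1 + m3 / m5)).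
Definition qb (m1 m2 m3 m4 m5 : R) : R := m1 + m5 - m4 - m2 / (1 + m3 / m5).
Definition qc (m4 m5 : R) : R := m5 - m4.
Definition qDelta (m1 m2 m3 m4 m5 : R) : R :=
  qb m1 m2 m3 m4 m5 ^ 2 - 4 * qa m2 m3 m5 * qc m4 m5.

Definition L2 (m1 m2 m3 m4 m5 : R) : R :=
  (- qb m1 m2 m3 m4 m5 - sqrt (qDelta m1 m2 m3 m4 m5)) / (2 * qa m2 m3 m5).
Definition L3 (m1 m2 m3 m4 m5 : R) : R :=
  (- qb m1 m2 m3 m4 m5 + sqrt (qDelta m1 m2 m3 m4 m5)) / (2 * qa m2 m3 m5).

Definition Eq1 (m4 : R) : R * R := (1 / m4, 0).
Definition Eq2 (m1 m2 m3 m5 : R) (m4 : R) : R * R := (1 / m5, L2 m1 m2 m3 m4 m5).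
Definition Eq3 (m1 m2 m3 m5 : R) (m4 : R) : R * R := (1 / m5, L3 m1 m2 m3 m4 m5).

Definition J11 (G : R * R -> R * R) (x : R * R) : R :=
  Derive (fun c => fst (G (c, snd x))) (fst x).
Definition J12 (G : R * R -> R * R) (x : R * R) : R :=
  Derive (fun l => fst (G (fst x, l))) (snd x).
Definition J21 (G : R * R -> R * R) (x : R * R) : R :=
  Derive (fun c => snd (G (c, snd x))) (fst x).
Definition J22 (G : R * R -> R * R) (x : R * R) : R :=
  Derive (fun l => snd (G (fst x, l))) (snd x).

Definition eigenvalue (G : R * R -> R * R) (x : R * R) (lam : C) : Prop :=
  Cminus (Cmult (Cminus (RtoC (J11 G x)) lam) (Cminus (RtoC (J22 G x)) lam))
         (RtoC (J12 G x * J21 G x)) = RtoC 0.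

Definition is_equilibrium (G : R * R -> R * R) (x : R * R) : Prop :=
  G x = (0, 0).

Definition lin_stable (G : R * R -> R * R) (x : R * R) : Prop :=
  forall lam, eigenvalue G x lam -> Re lam < 0.
Definition lin_unstable (G : R * R -> R * R) (x : R * R) : Prop :=
  exists lam, eigenvalue G x lam /\ Re lam > 0.

Definition transcritical (F : R -> R * R -> R * R) (e f : R -> R * R) (mu0 : R)
  : Prop :=
  exists delta : R, delta > 0 /\
    (forall mu, Rabs (mu - mu0) < delta ->
       is_equilibrium (F mu) (e mu) /\ is_equilibrium (F mu) (f mu)) /\
    continuous (fun mu => fst (e mu)) mu0 /\ continuous (fun mu => snd (e mu)) mu0 /\
    continuous (fun mu => fst (f mu)) mu0 /\ continuous (fun mu => snd (f mu)) mu0 /\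
    e mu0 = f mu0 /\
    eigenvalue (F mu0) (e mu0) (RtoC 0) /\
    (forall mu, 0 < Rabs (mu - mu0) < delta -> e mu <> f mu) /\
    ( ((forall mu, mu0 - delta < mu < mu0 ->
          lin_stable (F mu) (e mu) /\ lin_unstable (F mu) (f mu)) /\
       (forall mu, mu0 < mu < mu0 + delta ->
          lin_unstable (F mu) (e mu) /\ lin_stable (F mu) (f mu)))
    \/
      ((forall mu, mu0 - delta < mu < mu0 ->
          lin_unstable (F mu) (e mu) /\ lin_stable (F mu) (f mu)) /\
       (forall mu, mu0 < mu < mu0 + delta ->
          lin_stable (F mu) (e mu) /\ lin_unstable (F mu) (f mu))) ).

(* Main.v *)
Require Import Defs.
From Stdlib Require Import Reals Lra Psatz.
From Coquelicot Require Import Coquelicot.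
Open Scope R_scope.
Lemma J11E m1 m2 m3 m5 mu C L : 1 + L <> 0 -> 1 + m3*C <> 0 ->
  J11 (field m1 m2 m3 m5 mu) (C, L) = m1 * (L/(1+L)) - m2*(L/(1+m3*C)^2) - mu.
Proof.
intros H1 H2. unfold J11, field, dC; simpl.
apply is_derive_unique. auto_derive. auto. field. auto.
Qed.
Lemma J12E m1 m2 m3 m5 mu C L : 1 + L <> 0 -> 1 + m3*C <> 0 ->
  J12 (field m1 m2 m3 m5 mu) (C, L) = m1 * C/(1+L)^2 - m2*C/(1+m3*C).
Proof.
intros H1 H2. unfold J12, field, dC; simpl.
apply is_derive_unique. auto_derive. auto. field. auto.
Qed.
Lemma J21E m1 m2 m3 m5 mu C L :
  J21 (field m1 m2 m3 m5 mu) (C, L) = - m5 * L.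
Proof.
unfold J21, field, dL; simpl.
apply is_derive_unique. auto_derive. auto. ring.
Qed.
Lemma J22E m1 m2 m3 m5 mu C L :
  J22 (field m1 m2 m3 m5 mu) (C, L) = 1 - m5 * C.
Proof.
unfold J22, field, dL; simpl.
apply is_derive_unique. auto_derive. auto. ring.
Qed.
Lemma eig_eq a b c d x y :
  Cminus (Cmult (Cminus (RtoC a) (x,y)) (Cminus (RtoC d) (x,y))) (RtoC (b * c)) = RtoC 0
  <-> ((a-x)*(d-x) - y*y - b*c = 0 /\ y*(a+d-2*x) = 0).
Proof.
unfold Cminus, Cmult, Cplus, Copp, RtoC; simpl. split.
- intros H. injection H as H1 H2. split; nra.
- intros [H1 H2]. f_equal; nra.
Qed.
Lemma stab_gen G x : J11 G x + J22 G x < 0 ->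
  J11 G x * J22 G x - J12 G x * J21 G x > 0 -> lin_stable G x.
Proof.
intros HT HD [u v] He. unfold eigenvalue in He. apply eig_eq in He.
destruct He as [E1 E2]. simpl.
set (a := J11 G x) in *. set (b := J12 G x) in *. set (c := J21 G x) in *. set (d := J22 G x) in *.
destruct (Req_dec v 0) as [Hv|Hv].
- subst v. nra.
- assert (a + d - 2*u = 0). { apply (Rmult_eq_reg_l v); [rewrite Rmult_0_r; auto|auto]. }
  lra.
Qed.
Lemma unstab_gen G x :
  J11 G x * J22 G x - J12 G x * J21 G x < 0 -> lin_unstable G x.
Proof.
intros HD.
set (a := J11 G x) in *. set (b := J12 G x) in *. set (c := J21 G x) in *. set (d := J22 G x) in *.
set (s := sqrt ((a+d)^2 - 4*(a*d-b*c))).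
assert (Hs : s*s = (a+d)^2 - 4*(a*d-b*c)) by (unfold s; apply sqrt_sqrt; pose proof (pow2_ge_0 (a+d)); lra).
assert (Hs0 : 0 <= s) by apply sqrt_pos.
exists ((a+d+s)/2, 0). split.
- unfold eigenvalue. apply eig_eq. fold a b c d. split; nra.
- change ((a+d+s)/2 > 0). destruct (Rle_lt_dec (a+d+s) 0) as [Hn|Hp]; [|lra]. assert (s*s <= (a+d)*(a+d)) by nra. nra.
Qed.
Lemma cont_pos f x : continuity_pt f x -> 0 < f x ->
  exists d, 0 < d /\ forall y, Rabs (y - x) < d -> 0 < f y.
Proof.
intros H Hf. destruct (H (f x) Hf) as [d [Hd Hy]].
exists d. split; auto. intros y Hyd.
destruct (Req_dec y x) as [->|Hne]; auto.
assert (Hr : R_dist (f y) (f x) < f x).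
{ apply Hy. split. unfold D_x, no_cond. split; auto. exact Hyd. }
unfold R_dist in Hr. apply Rabs_def2 in Hr. lra.
Qed.

Lemma conts (Ls : R -> R) m1 m2 m3 m5 (h5 : 0 < m5) (h3 : 0 < m3) (h2: 0 < m2) :
  continuity_pt Ls m5 -> Ls m5 = 0 ->
  let k := m2 / (1 + m3/m5) in
  continuity_pt (fun mu => mu - m1*(Ls mu/(1+Ls mu)) + m2*(Ls mu/(1+m3*(1/m5))^2)) m5 /\
  continuity_pt (fun mu => 1 + Ls mu) m5 /\
  continuity_pt (fun mu => (m1 - k) * (m1/((1+Ls mu)*(1+Ls mu)) - k)) m5 /\
  continuity_pt (fun mu => (m1 - k) * ((m1 + m5 - mu - k) - k * Ls mu)) m5.
Proof.
intros HL H0 k.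
assert (H1 : 1 + Ls m5 <> 0) by (rewrite H0; lra).
assert (Cid : continuity_pt (fun x => x) m5) by (apply derivable_continuous_pt; apply derivable_pt_id).
assert (Cc : forall c, continuity_pt (fun _ => c) m5) by (intro; apply continuity_pt_const; intros ? ?; auto).
assert (C1 : continuity_pt (fun mu => 1 + Ls mu) m5) by (apply continuity_pt_plus; auto).
split; [|split; [auto|split]].
- apply continuity_pt_plus. apply continuity_pt_minus. auto.
  apply continuity_pt_scal. apply continuity_pt_div; auto.
  apply continuity_pt_scal. apply continuity_pt_div; auto.
  pose proof (Rdiv_lt_0_compat m3 m5 h3 h5). unfold Rdiv in *. intro Hz. 
  simpl in Hz. rewrite Rmult_1_r in Hz. apply Rmult_integral in Hz. nra.
- apply continuity_pt_scal. apply continuity_pt_minus; auto.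
  apply continuity_pt_div; auto. apply continuity_pt_mult; auto.
- apply continuity_pt_scal.
  apply continuity_pt_minus; [|apply continuity_pt_scal; auto].
  apply continuity_pt_minus; [|apply Cc].
  apply continuity_pt_minus; [apply Cc|apply Cid].
Qed.

Lemma branch m1 m2 m3 m5 (h1 : 0 < m1) (h2 : 0 < m2) (h3 : 0 < m3) (h5 : 0 < m5)
  (Ls : R -> R) :
  continuity_pt Ls m5 -> Ls m5 = 0 ->
  (exists d0, 0 < d0 /\ forall mu, Rabs (mu - m5) < d0 ->
     qa m2 m3 m5 * Ls mu ^ 2 + qb m1 m2 m3 mu m5 * Ls mu + qc mu m5 = 0) ->
  m1 - m2 / (1 + m3/m5) <> 0 ->
  transcritical (field m1 m2 m3 m5) Eq1 (fun mu => (1/m5, Ls mu)) m5.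
Proof.
intros HL H0 [d0 [Hd0 Hq]] Hb.
destruct (conts Ls m1 m2 m3 m5 h5 h3 h2 HL H0) as [CT [C1 [Cg Ch]]].
set (k := m2 / (1 + m3/m5)) in *.
assert (Hm35 : 0 < m3 / m5) by (apply Rdiv_lt_0_compat; auto).
assert (Hk : 0 < k) by (unfold k; apply Rdiv_lt_0_compat; lra).
assert (Hm35' : 1 + m3 * (1/m5) <> 0).
{ replace (m3 * (1/m5)) with (m3/m5) by (unfold Rdiv; ring). lra. }
destruct (cont_pos _ _ CT) as [dT [HdT HT]].
{ cbv beta. rewrite H0, !Rdiv_0_l. lra. }
destruct (cont_pos _ _ C1) as [d1 [Hd1 H1']].
{ cbv beta. rewrite H0. lra. }
destruct (cont_pos _ _ Cg) as [dg [Hdg Hg]].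
{ cbv beta. rewrite H0. replace (m1 / ((1+0)*(1+0))) with m1 by field.
  pose proof (Rsqr_pos_lt _ Hb). unfold Rsqr in *. lra. }
destruct (cont_pos _ _ Ch) as [dh [Hdh Hh]].
{ cbv beta. rewrite H0. replace (m1 + m5 - m5 - k - k * 0) with (m1 - k) by ring.
  pose proof (Rsqr_pos_lt _ Hb). unfold Rsqr in *. lra. }
set (delta := Rmin (Rmin d0 dT) (Rmin (Rmin d1 dg) (Rmin dh m5))).
assert (Hdelta : 0 < delta).
{ unfold delta. repeat apply Rmin_pos; auto. }
assert (Hall : forall mu, Rabs (mu - m5) < delta ->
  Rabs (mu - m5) < d0 /\ Rabs (mu - m5) < dT /\ Rabs (mu - m5) < d1 /\
  Rabs (mu - m5) < dg /\ Rabs (mu - m5) < dh /\ 0 < mu).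
{ intros mu Hmu. unfold delta in Hmu.
  pose proof (Rmin_l (Rmin d0 dT) (Rmin (Rmin d1 dg) (Rmin dh m5))).
  pose proof (Rmin_r (Rmin d0 dT) (Rmin (Rmin d1 dg) (Rmin dh m5))).
  pose proof (Rmin_l d0 dT). pose proof (Rmin_r d0 dT).
  pose proof (Rmin_l (Rmin d1 dg) (Rmin dh m5)). pose proof (Rmin_r (Rmin d1 dg) (Rmin dh m5)).
  pose proof (Rmin_l d1 dg). pose proof (Rmin_r d1 dg).
  pose proof (Rmin_l dh m5). pose proof (Rmin_r dh m5).
  repeat split; try lra.
  assert (Hm5 : Rabs (mu - m5) < m5) by lra. apply Rabs_def2 in Hm5. lra. }
assert (Key : forall mu, Rabs (mu - m5) < delta ->
  J11 (field m1 m2 m3 m5 mu) (1/m5, Ls mu) + J22 (field m1 m2 m3 m5 mu) (1/m5, Ls mu) < 0 /\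
  (mu < m5 -> J11 (field m1 m2 m3 m5 mu) (1/m5, Ls mu) * J22 (field m1 m2 m3 m5 mu) (1/m5, Ls mu)
     - J12 (field m1 m2 m3 m5 mu) (1/m5, Ls mu) * J21 (field m1 m2 m3 m5 mu) (1/m5, Ls mu) < 0) /\
  (m5 < mu -> J11 (field m1 m2 m3 m5 mu) (1/m5, Ls mu) * J22 (field m1 m2 m3 m5 mu) (1/m5, Ls mu)
     - J12 (field m1 m2 m3 m5 mu) (1/m5, Ls mu) * J21 (field m1 m2 m3 m5 mu) (1/m5, Ls mu) > 0)).
{ intros mu Hmu. destruct (Hall mu Hmu) as [A0 [AT [A1 [Ag [Ah Apos]]]]].
  specialize (Hq mu A0). specialize (HT mu AT). specialize (H1' mu A1).
  specialize (Hg mu Ag). specialize (Hh mu Ah). cbv beta in *.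
  set (L := Ls mu) in *.
  assert (HL1 : 1 + L <> 0) by lra.
  rewrite J11E, J12E, J21E, J22E; auto.
  set (g := m1 / ((1 + L) * (1 + L)) - k) in *.
  set (hh := m1 + m5 - mu - k - k * L) in *.
  assert (HD : (m1 * (L / (1 + L)) - m2 * (L / (1 + m3 * (1 / m5)) ^ 2) - mu) * (1 - m5 * (1 / m5)) -
     (m1 * (1 / m5) / (1 + L) ^ 2 - m2 * (1 / m5) / (1 + m3 * (1 / m5))) * (- m5 * L) = L * g).
  { unfold g, k. field. repeat split; lra. }
  assert (HLh : L * hh = mu - m5).
  { unfold qa, qb, qc in Hq. fold k in Hq. unfold hh. nra. }
  rewrite HD. set (G := (m1 - k) * g) in *. set (H := (m1 - k) * hh) in *.
  assert (HDGH : L * g * (G * H) = (mu - m5) * (G * G)).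
  { unfold G, H. rewrite <- HLh. ring. }
  split; [|split].
  - replace (1 - m5 * (1/m5)) with 0 by (field; lra). lra.
  - intros Hlt. assert (Hr : (mu - m5) * (G * G) < 0).
    { apply Rmult_neg_pos; [lra|]. nra. }
    rewrite <- HDGH in Hr. assert (0 < G * H) by nra. nra.
  - intros Hlt. assert (Hr : (mu - m5) * (G * G) > 0).
    { apply Rmult_pos_pos; [lra|]. nra. }
    rewrite <- HDGH in Hr. assert (0 < G * H) by nra. nra. }
exists delta. split; [exact Hdelta|].
split.
{ intros mu Hmu. destruct (Hall mu Hmu) as [A0 [AT [A1 [Ag [Ah Apos]]]]].
  specialize (Hq mu A0). specialize (H1' mu A1). cbv beta in H1'.
  split.
  - unfold is_equilibrium, field, dC, dL, Eq1; simpl. f_equal; field; lra.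
  - unfold is_equilibrium, field, dL; simpl. f_equal; [|field; lra].
    set (L := Ls mu) in *.
    assert (E : dC m1 m2 m3 mu (1/m5) L * (m5 * (1 + L)) =
       qa m2 m3 m5 * L ^ 2 + qb m1 m2 m3 mu m5 * L + qc mu m5).
    { unfold dC, qa, qb, qc. field. repeat split; lra. }
    rewrite Hq in E. apply Rmult_integral in E. destruct E as [E|E]; auto.
    exfalso. apply Rmult_integral in E. lra. }
split.
{ apply continuity_pt_filterlim. unfold Eq1; simpl.
  apply continuity_pt_div. apply continuity_pt_const; intros ? ?; auto.
  apply derivable_continuous_pt; apply derivable_pt_id. lra. }
split.
{ apply continuity_pt_filterlim. unfold Eq1; simpl.
  apply continuity_pt_const; intros ? ?; auto. }
split.
{ apply continuity_pt_filterlim. simpl.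
  apply continuity_pt_const; intros ? ?; auto. }
split.
{ apply continuity_pt_filterlim. simpl. exact HL. }
split.
{ unfold Eq1. rewrite H0. reflexivity. }
split.
{ unfold eigenvalue, Eq1. rewrite J11E, J12E, J21E, J22E; try lra.
  apply (eig_eq _ _ _ _ 0 0). split; [|ring].
  replace (1 - m5 * (1/m5)) with 0 by (field; lra). ring. }
split.
{ intros mu [Hp Hlt] Heq. unfold Eq1 in Heq. injection Heq as Heq _.
  destruct (Hall mu Hlt) as [_ [_ [_ [_ [_ Apos]]]]].
  assert (mu = m5).
  { apply (f_equal (fun x => /x)) in Heq. unfold Rdiv in Heq.
    rewrite !Rmult_1_l, !Rinv_inv in Heq. auto. }
  subst. rewrite Rminus_diag, Rabs_R0 in Hp. lra. }
left. split.
- intros mu [Hlo Hhi].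
  assert (Hmu : Rabs (mu - m5) < delta) by (apply Rabs_def1; lra).
  destruct (Hall mu Hmu) as [_ [_ [_ [_ [_ Apos]]]]].
  destruct (Key mu Hmu) as [KT [KD _]].
  split.
  + assert (0 < m3 * (1/mu)) by (apply Rmult_lt_0_compat; [lra|apply Rdiv_lt_0_compat; lra]).
    assert (m5 * (1/mu) > 1).
    { replace (m5 * (1/mu)) with (m5/mu) by (unfold Rdiv; ring).
      apply Rlt_gt. apply (Rmult_lt_reg_r mu); auto. unfold Rdiv. rewrite Rmult_assoc, Rinv_l; lra. }
    apply stab_gen; unfold Eq1; rewrite ?J11E, ?J12E, ?J21E, ?J22E; try lra.
    * rewrite !Rdiv_0_l. replace ((m1 * 0 - m2 * 0 - mu) * (1 - m5 * (1 / mu)) -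
        (m1 * (1 / mu) / (1 + 0) ^ 2 - m2 * (1 / mu) / (1 + m3 * (1 / mu))) * (- m5 * 0))
        with (m5 - mu) by (field; lra). lra.
  + apply unstab_gen. apply KD. lra.
- intros mu [Hlo Hhi].
  assert (Hmu : Rabs (mu - m5) < delta) by (apply Rabs_def1; lra).
  destruct (Hall mu Hmu) as [_ [_ [_ [_ [_ Apos]]]]].
  destruct (Key mu Hmu) as [KT [_ KD]].
  split.
  + assert (0 < m3 * (1/mu)) by (apply Rmult_lt_0_compat; [lra|apply Rdiv_lt_0_compat; lra]).
    apply unstab_gen; unfold Eq1; rewrite ?J11E, ?J12E, ?J21E, ?J22E; try lra.
    * rewrite !Rdiv_0_l. replace ((m1 * 0 - m2 * 0 - mu) * (1 - m5 * (1 / mu)) -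
        (m1 * (1 / mu) / (1 + 0) ^ 2 - m2 * (1 / mu) / (1 + m3 * (1 / mu))) * (- m5 * 0))
        with (m5 - mu) by (field; lra). lra.
  + apply stab_gen; auto.
Qed.

Lemma quad_m a b c s : a <> 0 -> s * s = b ^ 2 - 4 * a * c ->
  a * ((- b - s) / (2 * a)) ^ 2 + b * ((- b - s) / (2 * a)) + c = 0.
Proof.
intros Ha Hs.
replace (a * ((- b - s) / (2 * a)) ^ 2 + b * ((- b - s) / (2 * a)) + c)
  with ((s * s - (b ^ 2 - 4 * a * c)) / (4 * a)) by (field; auto).
rewrite Hs. unfold Rdiv. ring.
Qed.

Lemma quad_p a b c s : a <> 0 -> s * s = b ^ 2 - 4 * a * c ->
  a * ((- b + s) / (2 * a)) ^ 2 + b * ((- b + s) / (2 * a)) + c = 0.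
Proof.
intros Ha Hs.
replace (a * ((- b + s) / (2 * a)) ^ 2 + b * ((- b + s) / (2 * a)) + c)
  with ((s * s - (b ^ 2 - 4 * a * c)) / (4 * a)) by (field; auto).
rewrite Hs. unfold Rdiv. ring.
Qed.

Lemma Delta_facts m1 m2 m3 m5 (h2 : 0 < m2) (h3 : 0 < m3) (h5 : 0 < m5) :
  m1 - m2 / (1 + m3/m5) <> 0 ->
  qDelta m1 m2 m3 m5 m5 = (m1 - m2 / (1 + m3/m5)) ^ 2 /\
  0 < qDelta m1 m2 m3 m5 m5 /\
  continuity_pt (fun mu => qDelta m1 m2 m3 mu m5) m5 /\
  exists d0, 0 < d0 /\ forall mu, Rabs (mu - m5) < d0 -> 0 < qDelta m1 m2 m3 mu m5.
Proof.
intros Hb.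
assert (E : qDelta m1 m2 m3 m5 m5 = (m1 - m2 / (1 + m3/m5)) ^ 2).
{ unfold qDelta, qb, qa, qc. ring. }
assert (P : 0 < qDelta m1 m2 m3 m5 m5).
{ rewrite E. pose proof (Rsqr_pos_lt _ Hb). unfold Rsqr in *. lra. }
assert (C : continuity_pt (fun mu => qDelta m1 m2 m3 mu m5) m5).
{ apply continuity_pt_filterlim.
  change (continuous (fun mu => qDelta m1 m2 m3 mu m5) m5). apply (@ex_derive_continuous R_AbsRing R_NormedModule).
  unfold qDelta, qb, qa, qc. auto_derive. auto. }
split; [auto|split; [auto|split; [auto|]]].
apply (cont_pos _ _ C P).
Qed.

Theorem theorem5 (m1 m2 m3 m5 : R)
  (h1 : 0 < m1) (h2 : 0 < m2) (h3 : 0 < m3) (h5 : 0 < m5) :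
  (m2 > m1 * (1 + m3 / m5) ->
     transcritical (field m1 m2 m3 m5) Eq1 (Eq2 m1 m2 m3 m5) m5) /\
  (m2 < m1 * (1 + m3 / m5) ->
     transcritical (field m1 m2 m3 m5) Eq1 (Eq3 m1 m2 m3 m5) m5).
Proof.
assert (Hm35 : 0 < m3 / m5) by (apply Rdiv_lt_0_compat; auto).
assert (Ha : qa m2 m3 m5 <> 0).
{ unfold qa. assert (0 < m2 / (1 + m3/m5)) by (apply Rdiv_lt_0_compat; lra). lra. }
assert (Ha2 : 2 * qa m2 m3 m5 <> 0) by lra.
split; intros Hm.
- assert (Hk : m1 < m2 / (1 + m3/m5)).
  { apply (Rmult_lt_reg_r (1 + m3/m5)); [lra|]. unfold Rdiv. rewrite Rmult_assoc, Rinv_l; lra. }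
  assert (Hb : m1 - m2 / (1 + m3/m5) <> 0) by lra.
  destruct (Delta_facts m1 m2 m3 m5 h2 h3 h5 Hb) as [DE [DP [DC [d0 [Hd0 HD]]]]].
  apply (branch m1 m2 m3 m5 h1 h2 h3 h5 (fun mu => L2 m1 m2 m3 mu m5)).
  + apply continuity_pt_filterlim.
    change (continuous (fun mu => L2 m1 m2 m3 mu m5) m5). apply (@ex_derive_continuous R_AbsRing R_NormedModule).
    unfold L2, qDelta, qb, qa, qc. unfold qDelta, qb, qa, qc in DP, Ha2. auto_derive. repeat split; auto.
  + cbv beta. unfold L2. rewrite DE. rewrite <- Rsqr_pow2, sqrt_Rsqr_abs, Rabs_left.
    * unfold qb, qc. rewrite <- (Rdiv_0_l (2 * qa m2 m3 m5)). f_equal. ring.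
    * unfold qb. lra.
  + exists d0. split; auto. intros mu Hmu. unfold L2.
    apply quad_m; auto. apply sqrt_sqrt. specialize (HD mu Hmu). unfold qDelta in HD. lra.
  + auto.
- assert (Hk : m1 > m2 / (1 + m3/m5)).
  { apply (Rmult_lt_reg_r (1 + m3/m5)); [lra|]. unfold Rdiv. rewrite Rmult_assoc, Rinv_l; lra. }
  assert (Hb : m1 - m2 / (1 + m3/m5) <> 0) by lra.
  destruct (Delta_facts m1 m2 m3 m5 h2 h3 h5 Hb) as [DE [DP [DC [d0 [Hd0 HD]]]]].
  apply (branch m1 m2 m3 m5 h1 h2 h3 h5 (fun mu => L3 m1 m2 m3 mu m5)).
  + apply continuity_pt_filterlim.
    change (continuous (fun mu => L3 m1 m2 m3 mu m5) m5). apply (@ex_derive_continuous R_AbsRing R_NormedModule).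
    unfold L3, qDelta, qb, qa, qc. unfold qDelta, qb, qa, qc in DP, Ha2. auto_derive. repeat split; auto.
  + cbv beta. unfold L3. rewrite DE. rewrite <- Rsqr_pow2, sqrt_Rsqr_abs, Rabs_right.
    * unfold qb, qc. rewrite <- (Rdiv_0_l (2 * qa m2 m3 m5)). f_equal. ring.
    * unfold qb. lra.
  + exists d0. split; auto. intros mu Hmu. unfold L3.
    apply quad_p; auto. apply sqrt_sqrt. specialize (HD mu Hmu). unfold qDelta in HD. lra.
  + auto.
Qed.
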